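(* Let $d\ge 2$ be an even integer, $p\ge 0$ an integer, and $M\ge 1$ an integer with $2M+1\ge d+p+1$. Let $\gamma:[0,\pi]\to[0,\infty)$ be an integrable weighting function that is positive on a subset of $[0,\pi]$ of positive measure. For $\mathbf a=(a_{-M},\dots,a_M)\in\mathbb R^{2M+1}$ define the spectral error $$e(\eta)=\sum_{m=-M}^{M}a_m e^{jm\eta}-(j\eta)^d,\qquad \eta\in[0,\pi],\ j=\sqrt{-1}.$$ Let $\mathbf a^\ast$ be a minimizer of $$\int_0^\pi \gamma(\eta)\,|e(\eta)|^2\,d\eta$$ over all $\mathbf a\in\mathbb R^{2M+1}$ satisfying the order-of-accuracy constraints $$\sum_{m=-M}^{M} m^q a_m=\begin{cases}0,& q\neq d,\\ d!,& q=d,\end{cases}\qquad q=0,1,\dots,d+p .$$ Then the spectral error of $\mathbf a^\ast$ satisfies $\operatorname{Im}[e(\eta)]=0$ for all $\eta\in[0,\pi]$ (equivalently $\sum_m a^\ast_m\sin(m\eta)\equiv 0$).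
   Context: This concerns explicit finite difference approximations $f^{(d)}(x_i)\approx (\Delta x)^{-d}\sum_{m=-M}^{M}a_m f(x_i+m\Delta x)$ of the $d$-th derivative on a uniform grid with spacing $\Delta x$; $\eta=k\Delta x$ is the normalized wavenumber. The constraints express that the approximation has truncation error of order $p+1$. Here $0^0=1$. *)

(* Defs.v *)
From HB Require Import structures.
From mathcomp Require Import all_boot all_order all_algebra.
From mathcomp Require Import all_classical all_reals all_analysis.
From mathcomp Require Import complex.
Set Implicit Arguments. Unset Strict Implicit. Unset Printing Implicit Defensive.
Import Order.TTheory GRing.Theory Num.Theory.
Import numFieldNormedType.Exports.
Local Open Scope ring_scope.
Local Open Scope classical_set_scope.
Local Open Scope complex_scope.

(* Stencil index i : 'I_(2M+1) corresponds to offset m = i - M. *)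
Definition offset (R : realType) (M : nat) (i : 'I_(2 * M + 1)) : R :=
  (nat_of_ord i)%:R - M%:R.
Arguments offset {R} M i.

Definition cexpj (R : realType) (t : R) : R[i] := (cos t) +i* (sin t).

Definition spec_err (R : realType) (M d : nat) (a : 'I_(2 * M + 1) -> R)
  (eta : R) : R[i] :=
  \sum_(i < 2 * M + 1) (a i)%:C * cexpj (offset M i * eta)
  - ('i * eta%:C) ^+ d.
Arguments spec_err {R} M d a eta.

Definition spec_err_abs2 (R : realType) (M d : nat) (a : 'I_(2 * M + 1) -> R)
  (eta : R) : R :=
  (complex.Re (spec_err M d a eta)) ^+ 2 + (complex.Im (spec_err M d a eta)) ^+ 2.
Arguments spec_err_abs2 {R} M d a eta.

Definition I0pi (R : realType) : set R := [set x : R | 0 <= x <= pi].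
Arguments I0pi R : clear implicits.

Definition objective (R : realType) (M d : nat) (gamma : R -> R)
  (a : 'I_(2 * M + 1) -> R) : \bar R :=
  (\int[lebesgue_measure]_(x in I0pi R)
     (gamma x * spec_err_abs2 M d a x)%:E)%E.
Arguments objective {R} M d gamma a.

(* Order-of-accuracy constraints, q = 0..d+p, with 0^0 = 1. *)
Definition accuracy_constraints (R : realType) (M d p : nat)
  (a : 'I_(2 * M + 1) -> R) : Prop :=
  forall q : nat, (q <= d + p)%N ->
    \sum_(i < 2 * M + 1) offset M i ^+ q * a i
      = (if q == d then (d`!)%:R else 0).
Arguments accuracy_constraints {R} M d p a.

(* Main.v *)
Require Import Defs.
From HB Require Import structures.
From mathcomp Require Import all_boot all_order all_algebra.
From mathcomp Require Import all_classical all_reals all_analysis.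
From mathcomp Require Import complex polyrcf.
From mathcomp Require Import ring lra measurable_realfun.
From mathcomp Require Import measurable_fun_approximation.
Set Implicit Arguments. Unset Strict Implicit. Unset Printing Implicit Defensive.
Import Order.TTheory GRing.Theory Num.Theory.
Import numFieldNormedType.Exports.
Local Open Scope ring_scope.
Local Open Scope classical_set_scope.

Section Alg.
Variable R : realType.

Lemma ReD (x y : R[i]) : complex.Re (x + y) = complex.Re x + complex.Re y.
Proof. by case: x; case: y. Qed.
Lemma ImD (x y : R[i]) : complex.Im (x + y) = complex.Im x + complex.Im y.
Proof. by case: x; case: y. Qed.
Lemma ReN (x : R[i]) : complex.Re (- x) = - complex.Re x.
Proof. by case: x. Qed.
Lemma ImN (x : R[i]) : complex.Im (- x) = - complex.Im x.
Proof. by case: x. Qed.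

Lemma Re_sum n (F : 'I_n -> R[i]) :
  complex.Re (\sum_(i < n) F i) = \sum_(i < n) complex.Re (F i).
Proof. by apply: (big_morph _ ReD). Qed.
Lemma Im_sum n (F : 'I_n -> R[i]) :
  complex.Im (\sum_(i < n) F i) = \sum_(i < n) complex.Im (F i).
Proof. by apply: (big_morph _ ImD). Qed.

Lemma Re_term (a t : R) : complex.Re ((a%:C)%C * cexpj t) = a * cos t.
Proof. by rewrite /cexpj /=; ring. Qed.
Lemma Im_term (a t : R) : complex.Im ((a%:C)%C * cexpj t) = a * sin t.
Proof. by rewrite /cexpj /=; ring. Qed.

Lemma ipow_even (d : nat) (x : R) : ~~ odd d ->
  ('i%C * (x%:C)%C) ^+ d = (((-1) ^+ (d./2) * x ^+ d)%:C)%C.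
Proof.
move=> ev.
have hd : d = (2 * d./2)%N by rewrite mul2n -[LHS]odd_double_half (negbTE ev).
rewrite exprMn rmorphM /= rmorphXn /= rmorphN1.
congr (_ * _); rewrite {1}hd exprM; last by rewrite -exprM -hd rmorphXn.
congr (_ ^+ _); rewrite expr2.
apply/eqP; rewrite eq_complex /=; apply/andP; split; apply/eqP; ring.
Qed.

Lemma Re_real (c : R) : complex.Re ((c%:C)%C : R[i]) = c. Proof. by []. Qed.
Lemma Im_real (c : R) : complex.Im ((c%:C)%C : R[i]) = 0. Proof. by []. Qed.

Definition cR M (a : 'I_(2 * M + 1) -> R) (x : R) :=
  \sum_(i < 2 * M + 1) a i * cos (offset M i * x).
Definition sI M (a : 'I_(2 * M + 1) -> R) (x : R) :=
  \sum_(i < 2 * M + 1) a i * sin (offset M i * x).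
Definition pw (d : nat) (x : R) := (-1) ^+ (d./2) * x ^+ d.

Lemma Re_spec M d a x : ~~ odd d ->
  complex.Re (spec_err M d a x) = cR a x - pw d x.
Proof.
move=> ev; rewrite /spec_err ReD ReN Re_sum ipow_even // Re_real.
by congr (_ - _); apply: eq_bigr => i _; rewrite Re_term.
Qed.

Lemma Im_spec M d a x : ~~ odd d ->
  complex.Im (spec_err M d a x) = sI a x.
Proof.
move=> ev; rewrite /spec_err ImD ImN Im_sum ipow_even // Im_real oppr0 addr0.
by apply: eq_bigr => i _; rewrite Im_term.
Qed.

Lemma abs2_spec M d a x : ~~ odd d ->
  spec_err_abs2 M d a x = (cR a x - pw d x) ^+ 2 + sI a x ^+ 2.
Proof. by move=> ev; rewrite /spec_err_abs2 Re_spec // Im_spec. Qed.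

Lemma offset_rev M (i : 'I_(2 * M + 1)) :
  offset M (rev_ord i) = - offset M i :> R.
Proof.
rewrite /offset /=; have := ltn_ord i; move: (nat_of_ord i) => k hk.
rewrite natrB // -addn1 !natrD; ring.
Qed.

Lemma sum_rev M (a : 'I_(2 * M + 1) -> R) (f : R -> R) :
  \sum_(i < 2 * M + 1) a (rev_ord i) * f (offset M i)
  = \sum_(i < 2 * M + 1) a i * f (- offset M i).
Proof.
rewrite (reindex_inj rev_ord_inj) /=; apply: eq_bigr => i _.
by rewrite rev_ordK offset_rev.
Qed.

Definition sym M (a : 'I_(2 * M + 1) -> R) (i : 'I_(2 * M + 1)) :=
  (a i + a (rev_ord i)) / 2.

Lemma sum_sym M (a : 'I_(2 * M + 1) -> R) (f : R -> R) :
  \sum_(i < 2 * M + 1) sym a i * f (offset M i)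
  = (\sum_(i < 2 * M + 1) a i * f (offset M i)
     + \sum_(i < 2 * M + 1) a i * f (- offset M i)) / 2.
Proof.
rewrite -sum_rev -big_split /= mulr_suml; apply: eq_bigr => i _.
rewrite /sym; ring.
Qed.

Lemma cR_sym M (a : 'I_(2 * M + 1) -> R) x : cR (sym a) x = cR a x.
Proof.
rewrite /cR (sum_sym a (fun o => cos (o * x))).
under [X in (_ + X) / 2]eq_bigr do rewrite mulNr cosN.
by field.
Qed.

Lemma sI_sym M (a : 'I_(2 * M + 1) -> R) x : sI (sym a) x = 0.
Proof.
rewrite /sI (sum_sym a (fun o => sin (o * x))).
under [X in (_ + X) / 2]eq_bigr do rewrite mulNr sinN mulrN.
by rewrite sumrN subrr mul0r.
Qed.

Lemma acc_sym M d p (a : 'I_(2 * M + 1) -> R) : ~~ odd d ->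
  accuracy_constraints M d p a -> accuracy_constraints M d p (sym a).
Proof.
move=> ev ha q hq.
have E : forall b : 'I_(2 * M + 1) -> R, \sum_(i < 2 * M + 1) offset M i ^+ q * b i
   = \sum_(i < 2 * M + 1) b i * (offset M i ^+ q).
  by move=> b; apply: eq_bigr => i _; rewrite mulrC.
rewrite E (sum_sym a (fun o => o ^+ q)) -E.
under [X in (_ + X) / 2]eq_bigr do rewrite exprNn mulrA [_ * (-1) ^+ q]mulrC -mulrA.
rewrite -mulr_sumr -E ha //.
case: (boolP (odd q)) => oq.
  have -> : (q == d) = false by apply/negbTE; apply: contraNneq ev => <-.
  by rewrite mulr0 addr0 mul0r.
rewrite -signr_odd (negbTE oq) expr0 mul1r; by field.
Qed.

Fixpoint cheb (k : nat) : {poly R} * {poly R} :=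
  match k with
  | 0 => (1, 0)
  | k'.+1 => ((cheb k').1 * 'X - (1 - 'X ^+ 2) * (cheb k').2,
              (cheb k').2 * 'X + (cheb k').1)
  end.

Lemma cheb_ok k x : cos (k%:R * x) = (cheb k).1.[cos x] /\
  sin (k%:R * x) = sin x * (cheb k).2.[cos x].
Proof.
elim: k => [|k [IH1 IH2]] /=.
  by rewrite mul0r cos0 sin0 !hornerE.
rewrite mulrSr mulrDl mul1r cosD sinD IH1 IH2; split.
  transitivity ((cheb k).1.[cos x] * cos x - sin x ^+ 2 * (cheb k).2.[cos x]).
    ring.
  by rewrite sin2cos2 !hornerE.
rewrite !hornerE; ring.
Qed.

Definition kk M (i : 'I_(2 * M + 1)) : nat :=
  if (M <= i)%N then (i - M)%N else (M - i)%N.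
Definition sg M (i : 'I_(2 * M + 1)) : R := if (M <= i)%N then 1 else -1.

Lemma offset_kk M (i : 'I_(2 * M + 1)) : offset M i = sg i * (kk i)%:R.
Proof.
rewrite /offset /sg /kk; case: ifP => h.
  by rewrite mul1r natrB.
rewrite mulN1r natrB ?opprB //.
by move/negbT: h; rewrite -ltnNge => /ltnW.
Qed.

Definition Qp M (a : 'I_(2 * M + 1) -> R) : {poly R} :=
  \sum_(i < 2 * M + 1) (a i * sg i) *: (cheb (kk i)).2.

Lemma sI_Q M (a : 'I_(2 * M + 1) -> R) x : sI a x = sin x * (Qp a).[cos x].
Proof.
rewrite /sI /Qp horner_sum mulr_sumr; apply: eq_bigr => i _.
rewrite hornerZ offset_kk -mulrA.
have [_ E] := cheb_ok (kk i) x.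
by rewrite /sg; case: ifP => _; rewrite ?mul1r ?mulN1r ?sinN E; ring.
Qed.

End Alg.

Lemma mcos (R : realType) (c : R) : measurable_fun setT (fun x : R => cos (c * x)).
Proof.
apply: (measurableT_comp (continuous_measurable_fun (@continuous_cos R))).
exact: mulrl_measurable.
Qed.
Lemma msin (R : realType) (c : R) : measurable_fun setT (fun x : R => sin (c * x)).
Proof.
apply: (measurableT_comp (continuous_measurable_fun (@continuous_sin R))).
exact: mulrl_measurable.
Qed.

Lemma mcR (R : realType) M (a : 'I_(2 * M + 1) -> R) : measurable_fun setT (cR a).
Proof.
apply: measurable_sum => i; apply: measurable_funM => //; exact: mcos.
Qed.
Lemma msI (R : realType) M (a : 'I_(2 * M + 1) -> R) : measurable_fun setT (sI a).
Proof.
apply: measurable_sum => i; apply: measurable_funM => //; exact: msin.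
Qed.
Lemma mpw (R : realType) d : measurable_fun setT (@pw R d).
Proof.
apply: measurable_funM => //; exact: measurable_funX.
Qed.

Lemma mI0pi (R : realType) : measurable (I0pi R).
Proof.
rewrite (_ : I0pi R = `[0, pi]%classic); first exact: measurable_itv.
by apply/seteqP; split => x /=; rewrite in_itv.
Qed.

Theorem lemma1 (R : realType) (d p M : nat) (gamma : R -> R)
  (astar : 'I_(2 * M + 1) -> R) :
  (2 <= d)%N -> ~~ odd d -> (1 <= M)%N -> (d + p + 1 <= 2 * M + 1)%N ->
  (forall x, I0pi R x -> 0 <= gamma x) ->
  lebesgue_measure.-integrable (I0pi R) (fun x => (gamma x)%:E) ->
  (0 < lebesgue_measure (I0pi R `&` [set x | (0 < gamma x)%R]))%E ->
  accuracy_constraints M d p astar ->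
  (forall a : 'I_(2 * M + 1) -> R, accuracy_constraints M d p a ->
     (objective M d gamma astar <= objective M d gamma a)%E) ->
  forall eta : R, I0pi R eta -> complex.Im (spec_err M d astar eta) = 0.
Proof.
move=> d2 ev M1 hMp g0 gint gpos acc amin eta Ieta.
rewrite Im_spec // sI_Q.
have [Q0|Qn0] := eqVneq (Qp astar) 0; first by rewrite Q0 horner0 mulr0.
exfalso.
have mD := @mI0pi R.
have [mgE gfin] := integrableP _ _ _ gint.
have mg : measurable_fun (I0pi R) gamma by apply/measurable_EFinP.
pose g1 := fun x => (gamma x * (cR astar x - pw d x) ^+ 2)%:E.
pose g2 := fun x => (gamma x * sI astar x ^+ 2)%:E.
have mg1 : measurable_fun (I0pi R) g1.
  apply/measurable_EFinP; apply: measurable_funM => //.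
  apply: measurable_funX; apply: measurable_funB;
    apply: measurable_funTS; [exact: mcR | exact: mpw].
have mg2 : measurable_fun (I0pi R) g2.
  apply/measurable_EFinP; apply: measurable_funM => //.
  apply: measurable_funX; apply: measurable_funTS; exact: msI.
have g10 : forall x, I0pi R x -> (0 <= g1 x)%E.
  by move=> x Dx; rewrite lee_fin mulr_ge0 ?g0 ?sqr_ge0.
have g20 : forall x, I0pi R x -> (0 <= g2 x)%E.
  by move=> x Dx; rewrite lee_fin mulr_ge0 ?g0 ?sqr_ge0.
have Ea : objective M d gamma astar =
    (\int[lebesgue_measure]_(x in I0pi R) g1 x + \int[lebesgue_measure]_(x in I0pi R) g2 x)%E.
  rewrite /objective -ge0_integralD //; apply: eq_integral => x _.
  by rewrite abs2_spec // mulrDr EFinD.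
have Eb : objective M d gamma (sym astar) = (\int[lebesgue_measure]_(x in I0pi R) g1 x)%E.
  rewrite /objective; apply: eq_integral => x _.
  by rewrite abs2_spec // cR_sym sI_sym expr0n /= addr0.
pose K := (\sum_(i < 2 * M + 1) `|astar i| + pi ^+ d) ^+ 2.
have bnd : forall x, I0pi R x -> (cR astar x - pw d x) ^+ 2 <= K.
  move=> x /andP [x0 xpi].
  have hu : `|cR astar x - pw d x| <= \sum_(i < 2 * M + 1) `|astar i| + pi ^+ d.
    apply: le_trans (ler_normB _ _) _; apply: lerD.
      apply: le_trans (ler_norm_sum _ _ _) _; apply: ler_sum => i _.
      by rewrite normrM ler_piMr ?cos_max.
    rewrite /pw normrM normrX normrN1 expr1n mul1r normrX ger0_norm //.
    by rewrite lerXn2r // nnegrE // ltW // pi_gt0.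
  rewrite -[_ ^+ 2]ger0_norm ?sqr_ge0 // normrX /K !expr2.
  by apply: ler_pM.
have K0 : 0 <= K by rewrite /K sqr_ge0.
have fin1 : (\int[lebesgue_measure]_(x in I0pi R) g1 x < +oo)%E.
  apply: (@le_lt_trans _ _ (\int[lebesgue_measure]_(x in I0pi R) (K%:E * (gamma x)%:E))%E).
    apply: ge0_le_integral => //.
      by apply: measurable_funeM.
    move=> x Dx; rewrite -EFinM lee_fin mulrC ler_wpM2r ?g0 //; exact: bnd.
  rewrite ge0_integralZl_EFin //; try by move=> x Dx; rewrite lee_fin g0.
  apply: lte_mul_pinfty => //.
  apply: le_lt_trans gfin; apply: ge0_le_integral => //;
    try (by move=> x Dx; rewrite lee_fin g0); try (by move=> x Dx; rewrite lee_abs).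
  by apply: measurableT_comp.
have int2 : (\int[lebesgue_measure]_(x in I0pi R) g2 x = 0)%E.
  have := amin _ (acc_sym ev acc); rewrite Ea Eb => H.
  have f1 : (\int[lebesgue_measure]_(x in I0pi R) g1 x)%E \is a fin_num.
    by rewrite ge0_fin_numE // integral_ge0.
  apply/eqP; rewrite eq_le integral_ge0 // andbT.
  by rewrite -(leeD2lE _ _ f1) adde0.
have ae2 : ae_eq lebesgue_measure (I0pi R) g2 (cst 0%E).
  apply/(ae_eq_integral_abs lebesgue_measure mD mg2).1; rewrite -int2.
  by apply: eq_integral => x; rewrite inE => Dx; rewrite gee0_abs // g20.
case: ae2 => N [mN N0 sN].
pose Z : set R := [set (0:R)] `|` [set pi] `|` acos @` [set` roots (Qp astar) (-1) 1].
have cZ : countable Z.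
  apply: finite_set_countable; rewrite !finite_setU; split; first split.
  - exact: finite_set1.
  - exact: finite_set1.
  - apply: finite_image; exact: finite_seq.
have mZ : measurable Z by apply: countable_measurable => // t; exact: measurable_set1.
have Z0 : lebesgue_measure Z = 0%E by apply: countable_lebesgue_measure0.
have Ssub : I0pi R `&` [set x | 0 < gamma x] `<=` N `|` Z.
  move=> x [Dx gx].
  case: (pselect (N x)) => [Nx|nNx]; [by left|right].
  have f0 : g2 x = 0%E.
    apply: contra_notP nNx => hne; apply: sN => /= H; apply: hne; exact: H.
  have s0 : sI astar x = 0.
    move: f0; rewrite /g2 => -[] /eqP; rewrite mulf_eq0 gt_eqF //= sqrf_eq0.
    by move/eqP.
  rewrite sI_Q in s0.
  move: (Dx) => /andP [x0 xpi].
  have [->|xn0] := eqVneq x 0; first by left; left.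
  have [->|xnpi] := eqVneq x pi; first by left; right.
  right.
  have sx : 0 < sin x.
    by apply: sin_gt0_pi; rewrite lt_neqAle eq_sym xn0 x0 lt_neqAle xnpi xpi.
  have rq : root (Qp astar) (cos x).
    by apply/eqP; move/eqP: s0; rewrite mulf_eq0 gt_eqF //= => /eqP.
  have cin : cos x \in `]-1, 1[%R.
    have c2 : cos x ^+ 2 < 1.
      by rewrite -(cos2Dsin2 x) ltrDl exprn_gt0.
    have : `|cos x| < 1.
      by rewrite -(expr_lt1 (n:=2)) // ?normr_ge0 // real_normK // num_real.
    by rewrite in_itv /= -ltr_norml.
  exists (cos x); first exact: (root_in_roots Qn0 cin rq).
  by rewrite cosK // in_itv /= x0 xpi.
have mS : measurable (I0pi R `&` [set x | 0 < gamma x]).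
  have := mg mD _ (measurable_itv `]0%R, +oo[%R).
  congr measurable; apply/seteqP; split => x [Dx hx]; split => //=.
  - by move: hx; rewrite /= in_itv /= andbT.
  - by rewrite /= in_itv /= andbT.
have h1 := le_measure lebesgue_measure (mem_set mS) (mem_set (measurableU _ _ mN mZ)) Ssub.
have h2 := measureU2 lebesgue_measure mN mZ.
have N0' : lebesgue_measure N = 0%E := N0.
have h3 : (lebesgue_measure (N `|` Z) <= lebesgue_measure N + lebesgue_measure Z)%E := h2.
rewrite N0' Z0 adde0 in h3.
have := lt_le_trans gpos (le_trans h1 h3).
by rewrite ltxx.
Qed.
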